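(* Let $R$ be a ring such that $\big[[R,R],[R,R]^2\big]=\{0\}$. Then the commutator ideal of $R$ (the two-sided ideal generated by all commutators $[x,y]$, $x,y\in R$) is nil, i.e. each of its elements is nilpotent.
   Context: Rings are associative, not necessarily unital. For $x,y\in R$, $[x,y]=xy-yx$. For subsets $X,Y\subseteq R$, $[X,Y]$ denotes the additive subgroup generated by all $[x,y]$ with $x\in X$, $y\in Y$; $XY$ denotes the additive subgroup generated by all products $xy$; and $X^2=XX$. *)

(* Defs.v *)
(* MathComp rings are unital, so a (possibly non-unital)
   associative ring is modelled as an abelian group (zmodType) with a
   multiplication satisfying associativity and both distributive laws. *)
From mathcomp Require Import all_boot all_algebra.
Set Implicit Arguments. Unset Strict Implicit. Unset Printing Implicit Defensive.
Import GRing.Theory.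
Local Open Scope ring_scope.

Record is_rng (R : zmodType) (mul : R -> R -> R) : Prop := IsRng {
  rng_mulA : forall x y z, mul x (mul y z) = mul (mul x y) z;
  rng_mulDl : forall x y z, mul (x + y) z = mul x z + mul y z;
  rng_mulDr : forall x y z, mul x (y + z) = mul x y + mul x z
}.

Section Rng.
Variables (R : zmodType) (mul : R -> R -> R).

Definition comm_r (x y : R) : R := mul x y - mul y x.

Inductive addsubgrp (S : R -> Prop) : R -> Prop :=
  | asg_gen x : S x -> addsubgrp S x
  | asg_0 : addsubgrp S 0
  | asg_sub x y : addsubgrp S x -> addsubgrp S y -> addsubgrp S (x - y).

Definition commS (X Y : R -> Prop) : R -> Prop :=
  addsubgrp (fun z => exists x y, X x /\ Y y /\ z = comm_r x y).

Definition prodS (X Y : R -> Prop) : R -> Prop :=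
  addsubgrp (fun z => exists x y, X x /\ Y y /\ z = mul x y).

Definition allR : R -> Prop := fun _ => True.

Inductive ideal_gen (S : R -> Prop) : R -> Prop :=
  | ig_gen x : S x -> ideal_gen S x
  | ig_0 : ideal_gen S 0
  | ig_sub x y : ideal_gen S x -> ideal_gen S y -> ideal_gen S (x - y)
  | ig_mull r x : ideal_gen S x -> ideal_gen S (mul r x)
  | ig_mulr x r : ideal_gen S x -> ideal_gen S (mul x r).

Definition comm_ideal : R -> Prop :=
  ideal_gen (fun z => exists x y, z = comm_r x y).

(* npow x n = x^(n+1) = x * x * ... * x  (n+1 factors) *)
Fixpoint npow (x : R) (n : nat) : R :=
  match n with 0 => x | n'.+1 => mul x (npow x n') end.

Definition nilpotent_r (x : R) : Prop := exists n, npow x n = 0.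

End Rng.

(* Main.v *)
Require Import Defs.
From mathcomp Require Import all_boot all_algebra.
Local Open Scope ring_scope.
From mathcomp Require Import zify.
Set Implicit Arguments. Unset Strict Implicit. Unset Printing Implicit Defensive.
Import GRing.Theory.


Definition ncmono := (nat * seq nat)%type.
Definition mcat (m1 m2 : ncmono) : ncmono := (m1.1, m1.2 ++ m2.1 :: m2.2).
Definition ncpoly := seq (int * ncmono).
Definition pmono (m : ncmono) : ncpoly := [:: (1%:Z, m)].
Definition pneg (p : ncpoly) : ncpoly := map (fun t => (- t.1, t.2)) p.
Definition pmul (p q : ncpoly) : ncpoly :=
  flatten (map (fun t1 => map (fun t2 => (t1.1 * t2.1, mcat t1.2 t2.2)) q) p).
Definition pcomm (p q : ncpoly) : ncpoly := pmul p q ++ pneg (pmul q p).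
Definition lwp (w : seq nat) (p : ncpoly) : ncpoly :=
  if w is h :: t then pmul (pmono (h, t)) p else p.
Definition rwp (w : seq nat) (p : ncpoly) : ncpoly :=
  if w is h :: t then pmul p (pmono (h, t)) else p.

Fixpoint addt (t : int * ncmono) (p : ncpoly) : ncpoly :=
  match p with
  | [::] => [:: t]
  | s :: p' => if s.2 == t.2 then (s.1 + t.1, s.2) :: p' else s :: addt t p'
  end.
Definition collect (p : ncpoly) : ncpoly := foldr addt [::] p.
Definition allzero (p : ncpoly) : bool := all (fun t => t.1 == 0) p.

Inductive core := CH of ncmono & ncmono & ncmono & ncmono & ncmono & ncmono | CS of ncmono & ncmono.
Definition core_poly (c : core) : ncpoly :=
  match c with
  | CH m1 m2 m3 m4 m5 m6 =>
      pcomm (pcomm (pmono m1) (pmono m2))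
            (pmul (pcomm (pmono m3) (pmono m4)) (pcomm (pmono m5) (pmono m6)))
  | CS m1 m2 => pmul (pcomm (pmono m1) (pmono m2)) (pcomm (pmono m1) (pmono m2))
  end.
Definition item := (int * seq nat * core * seq nat)%type.
Definition item_poly (it : item) : ncpoly :=
  let: (c, L, k, Rw) := it in
  map (fun t => (c * t.1, t.2)) (lwp L (rwp Rw (core_poly k))).
Definition ncheck (tgt : ncpoly) (its : seq item) : bool :=
  allzero (collect (tgt ++ pneg (flatten (map item_poly its)))).

Section Sound.
Variables (R : zmodType) (mul : R -> R -> R) (Hr : is_rng mul) (e : nat -> R).

Lemma rmul0l x : mul 0 x = 0.
Proof.
have h := rng_mulDl Hr 0 0 x; rewrite addr0 in h.
by apply: (addrI (mul 0 x)); rewrite addr0 -h.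
Qed.
Lemma rmul0r x : mul x 0 = 0.
Proof.
have h := rng_mulDr Hr x 0 0; rewrite addr0 in h.
by apply: (addrI (mul x 0)); rewrite addr0 -h.
Qed.
Lemma rmulNl x y : mul (- x) y = - mul x y.
Proof.
apply/eqP; rewrite -subr_eq0 opprK -rng_mulDl // addNr rmul0l //.
Qed.
Lemma rmulNr x y : mul x (- y) = - mul x y.
Proof.
apply/eqP; rewrite -subr_eq0 opprK -rng_mulDr // addNr rmul0r //.
Qed.
Lemma rmulBl x y z : mul (x - y) z = mul x z - mul y z.
Proof. by rewrite rng_mulDl // rmulNl. Qed.
Lemma rmulBr x y z : mul x (y - z) = mul x y - mul x z.
Proof. by rewrite rng_mulDr // rmulNr. Qed.
Lemma rmulnl x y n : mul (x *+ n) y = (mul x y) *+ n.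
Proof. elim: n => [|n IH]; first by rewrite !mulr0n rmul0l. by rewrite !mulrS rng_mulDl // IH. Qed.
Lemma rmulnr x y n : mul x (y *+ n) = (mul x y) *+ n.
Proof. elim: n => [|n IH]; first by rewrite !mulr0n rmul0r. by rewrite !mulrS rng_mulDr // IH. Qed.
Lemma rmulzl x y (n : int) : mul (x *~ n) y = (mul x y) *~ n.
Proof. by case: n => n; rewrite /intmul ?rmulNl rmulnl. Qed.
Lemma rmulzr x y (n : int) : mul x (y *~ n) = (mul x y) *~ n.
Proof. by case: n => n; rewrite /intmul ?rmulNr rmulnr. Qed.

Definition wev (m : ncmono) : R := foldl (fun acc j => mul acc (e j)) (e m.1) m.2.
Lemma foldl_mulA x y t :
  foldl (fun acc j => mul acc (e j)) (mul x y) t = mul x (foldl (fun acc j => mul acc (e j)) y t).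
Proof. by elim: t x y => [|j t IH] x y //=; rewrite -rng_mulA // IH. Qed.
Lemma wev_cat m1 m2 : wev (mcat m1 m2) = mul (wev m1) (wev m2).
Proof. by rewrite /wev /mcat /= foldl_cat /= foldl_mulA. Qed.

Definition peval (p : ncpoly) : R := foldr (fun t acc => (wev t.2) *~ t.1 + acc) 0 p.
Lemma peval_cat p q : peval (p ++ q) = peval p + peval q.
Proof. by elim: p => [|t p IH] /=; rewrite ?add0r // IH addrA. Qed.
Lemma peval_mono m : peval (pmono m) = wev m.
Proof. by rewrite /peval /= addr0. Qed.
Lemma peval_neg p : peval (pneg p) = - peval p.
Proof. by elim: p => [|t p IH] /=; rewrite ?oppr0 // IH opprD mulrNz. Qed.
Lemma peval_mul p q : peval (pmul p q) = mul (peval p) (peval q).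
Proof.
elim: p => [|t p IH] /=; first by rewrite rmul0l.
rewrite peval_cat IH rng_mulDl //; congr (_ + _).
clear IH; elim: q => [|s q IHq] /=; first by rewrite rmul0r.
by rewrite IHq rng_mulDr // wev_cat !rmulzl !rmulzr mulrzA -mulrzA mulrC mulrzA.
Qed.
Lemma peval_comm p q : peval (pcomm p q) = comm_r mul (peval p) (peval q).
Proof. by rewrite /pcomm peval_cat peval_neg !peval_mul. Qed.

Definition lw (w : seq nat) (x : R) : R := if w is h :: t then mul (wev (h, t)) x else x.
Definition rw (w : seq nat) (x : R) : R := if w is h :: t then mul x (wev (h, t)) else x.
Lemma peval_lwp w p : peval (lwp w p) = lw w (peval p).
Proof. by case: w => [|h t] //=; rewrite peval_mul peval_mono. Qed.
Lemma peval_rwp w p : peval (rwp w p) = rw w (peval p).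
Proof. by case: w => [|h t] //=; rewrite peval_mul peval_mono. Qed.

Lemma peval_addt t p : peval (addt t p) = (wev t.2) *~ t.1 + peval p.
Proof.
elim: p => [|s p IH] //=; case: eqP => [<-|_] /=.
  by rewrite mulrzDr addrA [_ *~ t.1 + _]addrC.
by rewrite IH addrCA.
Qed.
Lemma peval_collect p : peval (collect p) = peval p.
Proof. by elim: p => [|t p IH] //=; rewrite peval_addt IH. Qed.
Lemma peval_allzero p : allzero p -> peval p = 0.
Proof. by elim: p => [|t p IH] //= /andP[/eqP -> /IH ->]; rewrite mulr0z addr0. Qed.

Definition core_ev (k : core) : R :=
  match k with
  | CH m1 m2 m3 m4 m5 m6 =>
    comm_r mul (comm_r mul (wev m1) (wev m2))
      (mul (comm_r mul (wev m3) (wev m4)) (comm_r mul (wev m5) (wev m6)))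
  | CS m1 m2 => mul (comm_r mul (wev m1) (wev m2)) (comm_r mul (wev m1) (wev m2))
  end.
Lemma peval_core k : peval (core_poly k) = core_ev k.
Proof. by case: k => [m1 m2 m3 m4 m5 m6|m1 m2]; rewrite /core_poly /core_ev ?peval_comm ?peval_mul ?peval_comm ?peval_mono. Qed.

Definition item_ev (it : item) : R :=
  let: (c, L, k, Rw) := it in (lw L (rw Rw (core_ev k))) *~ c.
Lemma peval_scale c p : peval (map (fun t => (c * t.1, t.2)) p) = (peval p) *~ c.
Proof.
elim: p => [|t p IH] /=; first by rewrite mul0rz.
by rewrite IH mulrzDl -mulrzA mulrC.
Qed.
Lemma peval_item it : peval (item_poly it) = item_ev it.
Proof.
case: it => [[[c L] k] Rw] /=.
by rewrite peval_scale peval_lwp peval_rwp peval_core.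
Qed.
Lemma ncheck_sound tgt its : ncheck tgt its ->
  peval tgt = foldr (fun it acc => item_ev it + acc) 0 its.
Proof.
move=> /peval_allzero; rewrite peval_collect peval_cat peval_neg => /eqP.
rewrite subr_eq0 => /eqP ->.
elim: its => [|it its IH] //=; by rewrite peval_cat peval_item IH.
Qed.
End Sound.
Definition u_p : ncpoly := pcomm (pmono (0%N,[::])) (pmono (1%N,[::])).
Definition tgtC1 := pmul (pmul (pmul (pmul u_p (pmono (2%N,[::]))) u_p) (pmono (3%N,[::]))) u_p.
Definition tgtC2 := pmul (pmul (pmul (pmul u_p u_p) (pmono (2%N,[::]))) u_p) u_p.
Definition tgtC3 := pmul (pmul (pmul u_p u_p) u_p) u_p.
Definition certC1 : seq item := [::
  (Posz 1, [:: 0], CS (0, [::]) (1, [::]), [:: 1; 2; 3]);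
  (Negz 0, [:: 0; 1; 2; 3], CS (0, [::]) (1, [::]), [::]);
  (Negz 0, [::], CS (0, [::]) (1, [::]), [:: 0; 1; 3; 2]);
  (Negz 0, [:: 0], CS (0, [::]) (1, [::]), [:: 1; 3; 2]);
  (Posz 1, [:: 0; 1; 3; 2], CS (0, [::]) (1, [::]), [::]);
  (Negz 0, [:: 0], CS (0, [::]) (1, [::]), [:: 2; 1; 3]);
  (Posz 1, [:: 0; 2; 1; 3], CS (0, [::]) (1, [::]), [::]);
  (Posz 1, [::], CS (0, [::]) (1, [::]), [:: 0; 3; 1; 2]);
  (Posz 1, [:: 0], CS (0, [::]) (1, [::]), [:: 3; 1; 2]);
  (Posz 1, [:: 0; 3], CS (0, [::]) (1, [::]), [:: 1; 2]);
  (Negz 0, [:: 0; 3; 1; 2], CS (0, [::]) (1, [::]), [::]);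
  (Negz 0, [:: 0; 3], CS (0, [::]) (1, [::]), [:: 2; 1]);
  (Negz 0, [::], CS (0, [::]) (1, [::]), [:: 1; 2; 0; 3]);
  (Posz 1, [:: 1; 3; 2], CS (0, [::]) (1, [::]), [:: 0]);
  (Posz 1, [::], CS (0, [::]) (1, [::]), [:: 2; 0; 1; 3]);
  (Negz 0, [:: 3; 1; 2], CS (0, [::]) (1, [::]), [:: 0]);
  (Negz 0, [:: 0], CH (0, [::]) (0, [:: 1]) (1, [::]) (2, [::]) (1, [::]) (3, [::]), [::]);
  (Posz 1, [:: 0; 0], CH (0, [::]) (1, [::]) (1, [::]) (2, [::]) (1, [::]) (3, [::]), [::]);
  (Negz 0, [::], CH (0, [::]) (0, [:: 0; 1]) (1, [::]) (3, [::]) (1, [::]) (2, [::]), [::]);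
  (Posz 1, [:: 0], CH (0, [::]) (0, [:: 1]) (1, [::]) (3, [::]) (1, [::]) (2, [::]), [::]);
  (Negz 0, [:: 0], CH (0, [::]) (1, [::]) (0, [::]) (1, [::]) (1, [::]) (2, [::]), [:: 3]);
  (Posz 1, [:: 0], CH (0, [::]) (1, [::]) (0, [::]) (1, [::]) (1, [:: 2]) (3, [::]), [::]);
  (Negz 0, [:: 0], CH (0, [::]) (1, [::]) (0, [:: 1]) (1, [::]) (2, [::]) (3, [::]), [::]);
  (Negz 0, [::], CH (0, [:: 0]) (1, [::]) (0, [::]) (1, [:: 3]) (1, [::]) (2, [::]), [::]);
  (Posz 1, [::], CH (0, [:: 0]) (1, [::]) (0, [:: 1]) (3, [::]) (1, [::]) (2, [::]), [::]);
  (Negz 0, [::], CH (0, [:: 0]) (1, [::]) (0, [::]) (3, [::]) (1, [::]) (1, [:: 2]), [::]);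
  (Posz 1, [::], CH (0, [:: 0]) (1, [::]) (0, [::]) (3, [:: 1]) (1, [::]) (2, [::]), [::]);
  (Negz 0, [:: 0], CH (0, [::]) (1, [::]) (1, [::]) (2, [::]) (0, [::]) (1, [:: 3]), [::]);
  (Posz 1, [:: 0], CH (0, [::]) (1, [::]) (1, [::]) (2, [::]) (0, [:: 1]) (3, [::]), [::]);
  (Negz 0, [::], CH (0, [::]) (0, [:: 1]) (1, [::]) (3, [::]) (0, [::]) (1, [:: 2]), [::]);
  (Posz 1, [::], CH (0, [::]) (0, [:: 1]) (1, [::]) (3, [::]) (0, [:: 1]) (2, [::]), [::]);
  (Negz 0, [::], CH (0, [:: 0]) (1, [::]) (1, [::]) (3, [::]) (0, [:: 1]) (2, [::]), [::]);
  (Posz 1, [:: 0], CH (0, [::]) (1, [::]) (1, [::]) (3, [::]) (0, [::]) (1, [:: 2]), [::]);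
  (Negz 0, [:: 0], CH (0, [::]) (1, [::]) (1, [::]) (3, [::]) (0, [:: 1]) (2, [::]), [::]);
  (Posz 1, [::], CH (0, [:: 0]) (1, [::]) (1, [::]) (3, [::]) (0, [::]) (2, [:: 1]), [::]);
  (Posz 1, [:: 0; 0], CH (1, [::]) (2, [::]) (1, [::]) (3, [::]) (0, [::]) (1, [::]), [::]);
  (Posz 1, [:: 0], CH (0, [:: 1]) (3, [::]) (0, [::]) (1, [::]) (1, [::]) (2, [::]), [::]);
  (Posz 1, [:: 0], CH (0, [::]) (3, [::]) (0, [::]) (1, [::]) (1, [::]) (1, [:: 2]), [::]);
  (Negz 0, [:: 0], CH (0, [::]) (3, [::]) (0, [::]) (1, [::]) (1, [:: 1]) (2, [::]), [::]);
  (Posz 1, [::], CH (0, [::]) (0, [:: 3]) (0, [::]) (1, [::]) (1, [::]) (2, [::]), [:: 1]);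
  (Negz 0, [::], CH (0, [::]) (0, [:: 3; 1]) (0, [::]) (1, [::]) (1, [::]) (2, [::]), [::]);
  (Posz 1, [::], CH (0, [::]) (1, [::]) (0, [::]) (1, [::]) (0, [:: 1; 3]) (2, [::]), [::]);
  (Negz 0, [::], CH (0, [::]) (1, [::]) (0, [::]) (1, [::]) (0, [:: 3]) (1, [:: 2]), [::])].

Definition certC2 : seq item := [::
  (Negz 0, [:: 0], CH (0, [::]) (0, [:: 1]) (0, [::]) (1, [::]) (1, [::]) (1, [:: 2]), [::]);
  (Posz 2, [:: 0], CH (0, [::]) (0, [:: 1]) (0, [::]) (1, [::]) (1, [:: 1]) (2, [::]), [::]);
  (Negz 0, [:: 0], CH (0, [::]) (0, [:: 1]) (0, [::]) (1, [:: 1]) (1, [::]) (2, [::]), [::]);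
  (Posz 1, [:: 0], CH (0, [:: 0]) (1, [::]) (0, [::]) (1, [::]) (1, [::]) (1, [:: 2]), [::]);
  (Negz 0, [:: 0], CH (0, [:: 0]) (1, [::]) (0, [::]) (1, [::]) (1, [:: 1]) (2, [::]), [::]);
  (Negz 2, [:: 0], CH (0, [::]) (0, [:: 1]) (0, [::]) (1, [::]) (1, [::]) (2, [::]), [:: 1]);
  (Posz 2, [:: 0; 0], CH (0, [::]) (1, [::]) (0, [::]) (1, [::]) (1, [::]) (2, [::]), [:: 1]);
  (Posz 1, [:: 0], CH (0, [::]) (0, [:: 1; 1]) (0, [::]) (1, [::]) (1, [::]) (2, [::]), [::]);
  (Posz 1, [:: 0], CH (0, [:: 0]) (1, [:: 1]) (0, [::]) (1, [::]) (1, [::]) (2, [::]), [::]);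
  (Posz 1, [:: 0], CH (0, [:: 0; 1]) (1, [::]) (0, [::]) (1, [::]) (1, [::]) (2, [::]), [::]);
  (Negz 1, [:: 0; 0], CH (0, [:: 1]) (1, [::]) (0, [::]) (1, [::]) (1, [::]) (2, [::]), [::]);
  (Posz 1, [::], CH (0, [::]) (0, [:: 1]) (0, [:: 0]) (1, [::]) (1, [::]) (2, [::]), [:: 1]);
  (Posz 1, [::], CH (0, [::]) (0, [:: 1]) (0, [::]) (1, [:: 0; 1]) (1, [::]) (2, [::]), [::]);
  (Negz 0, [:: 0], CH (0, [::]) (1, [::]) (0, [::]) (1, [::]) (0, [::]) (1, [:: 1]), [:: 2]);
  (Negz 0, [:: 0], CH (0, [::]) (1, [::]) (0, [::]) (1, [::]) (0, [:: 1]) (1, [::]), [:: 2]);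
  (Negz 1, [:: 0], CH (0, [::]) (1, [:: 0; 1]) (0, [::]) (1, [::]) (1, [::]) (2, [::]), [::]);
  (Posz 1, [::], CH (0, [::]) (0, [:: 1]) (0, [::]) (1, [::]) (0, [:: 1; 2]) (1, [::]), [::]);
  (Posz 1, [::], CH (0, [::]) (0, [:: 1]) (0, [::]) (1, [::]) (0, [:: 2]) (1, [::]), [:: 1]);
  (Negz 0, [:: 0], CH (0, [::]) (1, [::]) (0, [::]) (1, [:: 1]) (0, [::]) (1, [::]), [:: 2]);
  (Negz 0, [::], CH (0, [::]) (0, [:: 1; 1]) (0, [:: 0]) (1, [::]) (1, [::]) (2, [::]), [::]);
  (Negz 0, [::], CH (0, [::]) (0, [:: 1; 1]) (0, [::]) (1, [::]) (0, [:: 2]) (1, [::]), [::])].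

Definition certC3 : seq item := [::
  (Posz 1, [::], CH (0, [::]) (0, [:: 1]) (0, [::]) (1, [::]) (0, [::]) (1, [::]), [:: 1]);
  (Posz 1, [::], CH (0, [::]) (0, [:: 1]) (0, [::]) (1, [::]) (0, [:: 1]) (1, [::]), [::]);
  (Negz 0, [:: 0], CH (0, [::]) (1, [::]) (0, [::]) (1, [::]) (0, [::]) (1, [:: 1]), [::]);
  (Negz 0, [:: 0], CH (0, [::]) (1, [::]) (0, [::]) (1, [::]) (0, [:: 1]) (1, [::]), [::]);
  (Negz 0, [:: 0], CH (0, [::]) (1, [::]) (0, [::]) (1, [:: 1]) (0, [::]) (1, [::]), [::]);
  (Negz 0, [::], CH (0, [::]) (0, [:: 1; 1]) (0, [::]) (1, [::]) (0, [::]) (1, [::]), [::])].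
Lemma okC1 : ncheck tgtC1 certC1. Proof. vm_compute. reflexivity. Qed.
Lemma okC2 : ncheck tgtC2 certC2. Proof. vm_compute. reflexivity. Qed.
Lemma okC3 : ncheck tgtC3 certC3. Proof. vm_compute. reflexivity. Qed.

Section Main.
Variables (R : zmodType) (mul : R -> R -> R) (Hr : is_rng mul).
Hypothesis HH : let C := commS mul (allR (R:=R)) (allR (R:=R)) in
   forall z, commS mul C (prodS mul C C) z -> z = 0.

Local Notation comm := (comm_r mul).
Local Notation mulA := (rng_mulA Hr).

Lemma hyp0 x1 x2 x3 x4 x5 x6 :
  comm (comm x1 x2) (mul (comm x3 x4) (comm x5 x6)) = 0.
Proof.
apply: HH; apply: asg_gen.
exists (comm x1 x2), (mul (comm x3 x4) (comm x5 x6)); split; last split => //.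
  by apply: asg_gen; exists x1, x2.
apply: asg_gen; exists (comm x3 x4), (comm x5 x6); split; last split => //.
  by apply: asg_gen; exists x3, x4.
by apply: asg_gen; exists x5, x6.
Qed.

Definition isq (s : R) := exists a b, s = mul (comm a b) (comm a b).
Definition Zid := ideal_gen mul isq.

Definition Jideal (J : R -> Prop) :=
  [/\ J 0, (forall x y, J x -> J y -> J (x - y)),
      (forall r x, J x -> J (mul r x)) & (forall x r, J x -> J (mul x r))].

Lemma Zid_ideal : Jideal Zid.
Proof. split; [exact: ig_0 | exact: ig_sub | exact: ig_mull | exact: ig_mulr]. Qed.
Lemma zero_ideal : Jideal (fun x => x = 0).
Proof.
split => //.
- by move=> x y -> ->; rewrite subrr.
- by move=> r x ->; rewrite rmul0r.
- by move=> x r ->; rewrite rmul0l.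
Qed.

Section JI.
Variables (J : R -> Prop) (HJ : Jideal J).
Lemma J0 : J 0. Proof. by case: HJ. Qed.
Lemma JN x : J x -> J (- x).
Proof. by case: HJ => h0 hs _ _ hx; rewrite -sub0r; apply: hs. Qed.
Lemma JD x y : J x -> J y -> J (x + y).
Proof. by case: HJ => h0 hs _ _ hx hy; rewrite -[y]opprK; apply: hs => //; apply: JN. Qed.
Lemma Jml r x : J x -> J (mul r x). Proof. by case: HJ => _ _ h _; apply: h. Qed.
Lemma Jmr x r : J x -> J (mul x r). Proof. by case: HJ => _ _ _ h; apply: h. Qed.
Lemma Jz x (n : int) : J x -> J (x *~ n).
Proof.
move=> hx; have hn : forall m, J (x *+ m).
  elim=> [|m IH]; first by rewrite mulr0n; apply: J0.
  by rewrite mulrS; apply: JD.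
by case: n => m; rewrite /intmul //; apply: JN.
Qed.
End JI.

Definition ol (o : option R) (x : R) := if o is Some g then mul g x else x.
Definition orr (x : R) (o : option R) := if o is Some g then mul x g else x.
Definition ocat (o1 o2 : option R) :=
  match o1, o2 with
  | None, o => o
  | o, None => o
  | Some a, Some b => Some (mul a b)
  end.

Lemma Jol J (HJ : Jideal J) o x : J x -> J (ol o x).
Proof. by case: o => //= g; apply: Jml. Qed.
Lemma Jor J (HJ : Jideal J) o x : J x -> J (orr x o).
Proof. by case: o => //= g; apply: Jmr. Qed.

Lemma L1 oL y o z : mul (orr (ol oL y) o) z = ol oL (mul (orr y o) z).
Proof. by case: oL; case: o => * //=; rewrite ?mulA. Qed.
Lemma L2 s oR oL w : mul (orr s oR) (ol oL w) = mul (orr s (ocat oR oL)) w.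
Proof. by case: oR; case: oL => * //=; rewrite ?mulA. Qed.
Lemma L3 x w oR : mul x (orr w oR) = orr (mul x w) oR.
Proof. by case: oR => * //=; rewrite ?mulA. Qed.
Lemma L4 a b o z : mul (orr (mul a b) o) z = mul a (mul (orr b o) z).
Proof. by case: o => * //=; rewrite ?mulA. Qed.
Lemma L5 o a b : mul (ol o a) b = ol o (mul a b).
Proof. by case: o => * //=; rewrite ?mulA. Qed.
Lemma L6 x o w : mul x (ol o w) = ol (ocat (Some x) o) w.
Proof. by case: o => * //=; rewrite ?mulA. Qed.
Lemma L7 x o w : mul (orr w o) x = orr w (ocat o (Some x)).
Proof. by case: o => * //=; rewrite ?mulA. Qed.
Lemma L8 o1 o2 w : ol o1 (orr w o2) = orr (ol o1 w) o2.
Proof. by case: o1; case: o2 => * //=; rewrite ?mulA. Qed.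

Lemma L9 s o1 o2 : orr (orr s o1) o2 = orr s (ocat o1 o2).
Proof. by case: o1; case: o2 => * //=; rewrite ?mulA. Qed.

Fixpoint chn (t : R) (os : seq (option R)) : R :=
  if os is o :: os' then mul (orr t o) (chn t os') else t.

Lemma chn_cat t os1 o os2 :
  mul (orr (chn t os1) o) (chn t os2) = chn t (os1 ++ o :: os2).
Proof. by elim: os1 => [|o1 os1 IH] //=; rewrite L4 IH. Qed.

Lemma chn_conj oL oR s os :
  chn (ol oL (orr s oR)) os =
  ol oL (orr (chn s (map (fun o => ocat (ocat oR o) oL) os)) oR).
Proof.
elim: os => [|o os IH] //=.
by rewrite IH L1 L9 L2 L3.
Qed.

Definition sgn (b : bool) (x : R) := if b then - x else x.

Lemma chn_neg t os : exists b, chn (- t) os = sgn b (chn t os).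
Proof.
elim: os => [|o os [b IH]] /=; first by exists true.
exists (~~ b); rewrite IH.
have -> : orr (- t) o = - orr t o by case: o => //= g; rewrite rmulNl.
by case: (b) => /=; rewrite rmulNl // ?rmulNr // opprK.
Qed.

Lemma Jsgn J (HJ : Jideal J) b x : J x -> J (sgn b x).
Proof. by case: b => //=; apply: JN. Qed.

(* products with n marked factors *)
Inductive PR (A : R -> Prop) : nat -> R -> Prop :=
  | PR0 x : PR A 0 x
  | PR1 a : A a -> PR A 1 a
  | PRm n m x y : PR A n x -> PR A m y -> PR A (n + m) (mul x y).

Lemma PR_le A n x : PR A n x -> forall m, (m <= n)%N -> PR A m x.
Proof.
elim=> {n x} [x|a Ha|n1 n2 x y _ IH1 _ IH2] m hm.
- by move: hm; rewrite leqn0 => /eqP ->; apply: PR0.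
- by case: m hm => [|[|m]] // _; [apply: PR0 | apply: PR1].
- have -> : m = (minn m n1 + (m - minn m n1))%N by rewrite subnKC // geq_minl.
  apply: PRm; first by apply: IH1; rewrite geq_minr.
  apply: IH2; move: hm; lia.
Qed.

Lemma PR_mono (A B : R -> Prop) n x : (forall y, A y -> B y) -> PR A n x -> PR B n x.
Proof.
move=> hAB; elim=> {n x} [x|a Ha|n1 n2 x y _ IH1 _ IH2].
- exact: PR0.
- by apply: PR1; apply: hAB.
- exact: PRm.
Qed.

Lemma PR_union (A B : R -> Prop) n x : PR (fun y => A y \/ B y) n x ->
  exists n1 n2, n = (n1 + n2)%N /\ PR A n1 x /\ PR B n2 x.
Proof.
elim=> {n x} [x|a [Ha|Ha]|n1 n2 x y _ [a1 [b1 [e1 [h1 h1']]]] _ [a2 [b2 [e2 [h2 h2']]]]].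
- by exists 0%N, 0%N; split; [|split; apply: PR0].
- by exists 1%N, 0%N; split; [|split; [apply: PR1|apply: PR0]].
- by exists 0%N, 1%N; split; [|split; [apply: PR0|apply: PR1]].
- exists (a1 + a2)%N, (b1 + b2)%N; split; first by rewrite e1 e2 addnACA.
  by split; apply: PRm.
Qed.

Lemma PR_false n x : PR (fun _ => False) n x -> n = 0%N.
Proof. by elim=> {n x} [x|a []|n1 n2 x y _ e1 _ e2] //; rewrite e1 e2. Qed.

Lemma PR_single t n x : PR (fun y => y = t) n.+1 x ->
  exists oL oR os, size os = n /\ x = ol oL (orr (chn t os) oR).
Proof.
move e : n.+1 => m h; elim: h n e => {m x} [x|a ha|n1 n2 x y h1 IH1 h2 IH2] n e //.
- by case: e => en; subst; exists None, None, [::].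
- move: e; case: n1 h1 IH1 => [|n1] h1 IH1; case: n2 h2 IH2 => [|n2] h2 IH2 //.
  + rewrite add0n => -[en]; have [oL [oR [os [sz ->]]]] := IH2 _ (erefl _).
    by exists (ocat (Some x) oL), oR, os; split; [move: sz en; lia | rewrite L6].
  + rewrite addn0 => -[en]; have [oL [oR [os [sz ->]]]] := IH1 _ (erefl _).
    exists oL, (ocat oR (Some y)), os; split; first by move: sz en; lia.
    by rewrite L8 L7 L8.
  + move=> [en]; have [oL1 [oR1 [os1 [sz1 ->]]]] := IH1 _ (erefl _).
    have [oL2 [oR2 [os2 [sz2 ->]]]] := IH2 _ (erefl _).
    exists oL1, oR2, (os1 ++ ocat oR1 oL2 :: os2); split.
      by rewrite size_cat /= sz1 sz2; move: en; lia.
    by rewrite L5 L2 L3 chn_cat.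
Qed.

Section Stage.
Variables (J : R -> Prop) (HJ : Jideal J) (S : R -> Prop) (k : nat).
Hypothesis key : forall s, S s -> forall os, size os = k -> J (chn s os).

Definition Gen (t : R) := exists b oL oR s, S s /\ t = sgn b (ol oL (orr s oR)).

Lemma Gen_key t : Gen t -> forall os, size os = k -> J (chn t os).
Proof.
move=> [b [oL [oR [s [hs ->]]]]] os hos.
have h : J (chn (ol oL (orr s oR)) os).
  by rewrite chn_conj; apply: Jol => //; apply: Jor => //; apply: key; rewrite ?size_map.
case: b => //=; have [b' ->] := chn_neg (ol oL (orr s oR)) os.
exact: Jsgn.
Qed.

Lemma PR_list (l : seq R) : (forall t, t \in l -> Gen t) ->
  forall x, PR (fun y => y \in l) (k * size l + 1) x -> J x.
Proof.
elim: l => [|t l IH] hl x /=.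
  move=> h; have := PR_mono (B := fun _ => False) _ h.
  by rewrite muln0 add0n => /(_ (fun y hy => ltac:(by rewrite in_nil in hy))) /PR_false.
move=> h.
have h' : PR (fun y => y = t \/ y \in l) (k * (size l).+1 + 1) x.
  by apply: PR_mono h => y; rewrite in_cons => /orP[/eqP|]; [left|right].
have [n1 [n2 [en [p1 p2]]]] := PR_union h'.
case: (leqP (k.+1) n1) => hn1.
  have /PR_single [oL [oR [os [sz ->]]]] := PR_le p1 hn1.
  apply: Jol => //; apply: Jor => //; apply: Gen_key sz.
  by apply: hl; rewrite mem_head.
apply: IH; first by move=> y hy; apply: hl; rewrite in_cons hy orbT.
apply: (PR_le p2); move: en hn1; rewrite mulnS ltnS; lia.
Qed.
End Stage.

Section Dec.
Variables (S : R -> Prop) (k : nat).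
Local Notation Gen := (Gen S).

Lemma Gen_neg t : Gen t -> Gen (- t).
Proof.
move=> [b [oL [oR [s [hs ->]]]]]; exists (~~ b), oL, oR, s; split => //.
by case: b => /=; rewrite ?opprK.
Qed.
Lemma sgn_mull r b x : mul r (sgn b x) = sgn b (mul r x).
Proof. by case: b => //=; rewrite rmulNr. Qed.
Lemma sgn_mulr r b x : mul (sgn b x) r = sgn b (mul x r).
Proof. by case: b => //=; rewrite rmulNl. Qed.
Lemma Gen_mull r t : Gen t -> Gen (mul r t).
Proof.
move=> [b [oL [oR [s [hs ->]]]]]; exists b, (ocat (Some r) oL), oR, s; split => //.
by rewrite sgn_mull L6.
Qed.
Lemma Gen_mulr r t : Gen t -> Gen (mul t r).
Proof.
move=> [b [oL [oR [s [hs ->]]]]]; exists b, oL, (ocat oR (Some r)), s; split => //.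
by rewrite sgn_mulr L5 L7.
Qed.

Lemma sum_mull r (l : seq R) : mul r (\sum_(t <- l) t) = \sum_(t <- map (mul r) l) t.
Proof.
elim: l => [|a l IH]; first by rewrite !big_nil rmul0r.
by rewrite /= !big_cons rng_mulDr // IH.
Qed.
Lemma sum_mulr r (l : seq R) : mul (\sum_(t <- l) t) r = \sum_(t <- map (mul^~ r) l) t.
Proof.
elim: l => [|a l IH]; first by rewrite !big_nil rmul0l.
by rewrite /= !big_cons rng_mulDl // IH.
Qed.

Lemma ideal_dec x : ideal_gen mul S x ->
  exists l, (forall t, t \in l -> Gen t) /\ x = \sum_(t <- l) t.
Proof.
elim=> {x} [x hx| |x y _ [l1 [h1 ->]] _ [l2 [h2 ->]]|r x _ [l [h ->]]|x r _ [l [h ->]]].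
- exists [:: x]; split; last by rewrite big_seq1.
  by move=> t; rewrite mem_seq1 => /eqP ->; exists false, None, None, x.
- by exists [::]; rewrite big_nil.
- exists (l1 ++ map -%R l2); split.
    move=> t; rewrite mem_cat => /orP[/h1 //|/mapP[t' /h2 ht' ->]].
    exact: Gen_neg.
  by rewrite big_cat big_map sumrN.
- exists (map (mul r) l); split; last exact: sum_mull.
  by move=> t /mapP[t' /h ht' ->]; apply: Gen_mull.
- exists (map (mul^~ r) l); split; last exact: sum_mulr.
  by move=> t /mapP[t' /h ht' ->]; apply: Gen_mulr.
Qed.
End Dec.

Lemma sum_mul (l l' : seq R) :
  mul (\sum_(t <- l) t) (\sum_(t <- l') t) = \sum_(y <- [seq mul a b | a <- l, b <- l']) y.
Proof.
elim: l => [|a l IH]; first by rewrite !big_nil rmul0l.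
by rewrite big_cons rng_mulDl // IH /= big_cat /= sum_mull big_map.
Qed.

Lemma pow_PR (l : seq R) n : exists l', (forall y, y \in l' -> PR (fun z => z \in l) n.+1 y)
  /\ npow mul (\sum_(t <- l) t) n = \sum_(t <- l') t.
Proof.
elim: n => [|n [l' [h e]]].
  by exists l; split => // y hy; apply: PR1.
exists [seq mul a b | a <- l, b <- l']; split; last by rewrite /= e sum_mul.
move=> y /allpairsP[[a b] [ha hb ->]] /=.
by have := PRm (PR1 (A := fun z => z \in l) ha) (h _ hb); rewrite add1n.
Qed.

Lemma J_sum J (HJ : Jideal J) (l : seq R) : (forall y, y \in l -> J y) -> J (\sum_(t <- l) t).
Proof.
elim: l => [|a l IH] h; first by rewrite big_nil; apply: J0.
rewrite big_cons; apply: JD => //; first by apply: h; rewrite mem_head.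
by apply: IH => y hy; apply: h; rewrite in_cons hy orbT.
Qed.

Lemma stage J (HJ : Jideal J) (S : R -> Prop) (k : nat) :
  (forall s, S s -> forall os, size os = k -> J (chn s os)) ->
  forall x, ideal_gen mul S x -> exists N, J (npow mul x N).
Proof.
move=> key x /(ideal_dec) [l [hl ->]].
exists (k * size l)%N; have [l' [h' ->]] := pow_PR l (k * size l).
apply: J_sum => // y /h'; rewrite -addn1.
exact: (PR_list HJ key hl).
Qed.

Definition isCH (it : item) := if it is (_, _, CH _ _ _ _ _ _, _) then true else false.

Lemma sound0 e tgt its : ncheck tgt its -> all isCH its -> peval mul e tgt = 0.
Proof.
move=> /(ncheck_sound Hr e) ->; elim: its => [|[[[c L] kk] Rw] its IH] //= /andP[hk /IH ->].
case: kk hk => // m1 m2 m3 m4 m5 m6 _ /=; rewrite hyp0.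
have -> : rw mul e Rw 0 = 0 by case: Rw => //= *; rewrite rmul0l.
have -> : lw mul e L 0 = 0 by case: L => //= *; rewrite rmul0r.
by rewrite mul0rz addr0.
Qed.


Lemma soundZ e tgt its : ncheck tgt its -> Zid (peval mul e tgt).
Proof.
move=> /(ncheck_sound Hr e) ->; elim: its => [|[[[c L] kk] Rw] its IH] /=.
  exact: ig_0.
apply: (JD Zid_ideal) => //; apply: (Jz Zid_ideal).
have hc : Zid (core_ev mul e kk).
  case: kk => [m1 m2 m3 m4 m5 m6|m1 m2] /=; first by rewrite hyp0; apply: ig_0.
  by apply: ig_gen; eexists; eexists.
case: L => [|h t] /=; last apply: ig_mull; (case: Rw => [|h' t'] /=; last apply: ig_mulr); done.
Qed.

Definition env4 (a b g1 g2 : R) (i : nat) := nth 0 [:: a; b; g1; g2] i.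

Lemma u_ev a b g1 g2 : peval mul (env4 a b g1 g2) u_p = comm a b.
Proof. by rewrite /u_p (peval_comm Hr) !peval_mono. Qed.

Lemma keyA : forall s, (exists x y, s = comm x y) -> forall os, size os = 2%N -> Zid (chn s os).
Proof.
move=> s [a [b ->]] [|o1 [|o2 [|? ?]]] // _ /=.
have gen : Zid (mul (comm a b) (comm a b)) by apply: ig_gen; exists a, b.
case: o1 => [g1|]; case: o2 => [g2|] /=.
- have := soundZ (env4 a b g1 g2) okC1.
  by rewrite /tgtC1 !(peval_mul Hr) !u_ev !peval_mono /= !mulA.
- by apply: ig_mull.
- by rewrite -mulA mulA; apply: ig_mulr.
- by rewrite mulA; apply: ig_mulr.
Qed.

Lemma keyB : forall s, isq s -> forall os, size os = 1%N -> chn s os = 0.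
Proof.
move=> s [a [b ->]] [|o1 [|? ?]] // _ /=.
case: o1 => [g|] /=.
- have := sound0 (env4 a b g g) okC2 (erefl _).
  by rewrite /tgtC2 !(peval_mul Hr) !u_ev !peval_mono /= !mulA.
- have := sound0 (env4 a b a a) okC3 (erefl _).
  by rewrite /tgtC3 !(peval_mul Hr) !u_ev /= !mulA.
Qed.

Lemma npow_add x m n : mul (npow mul x m) (npow mul x n) = npow mul x (m + n).+1.
Proof. by elim: m => [|m IH] //=; rewrite -mulA IH. Qed.
Lemma npow_pow x a b : npow mul (npow mul x a) b = npow mul x (a * b + a + b).
Proof.
elim: b => [|b IH] /=; first by rewrite muln0 addn0.
by rewrite IH npow_add; congr npow; lia.
Qed.

Theorem main_thm z : comm_ideal mul z -> nilpotent_r mul z.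
Proof.
move=> hz.
have [N1 h1] := stage Zid_ideal keyA hz.
have [N2 h2] := stage zero_ideal keyB h1.
by exists (N1 * N2 + N1 + N2)%N; rewrite -npow_pow.
Qed.

End Main.


Unset Implicit Arguments.
Theorem corollary2p4 (R : zmodType) (mul : R -> R -> R) (Hrng : is_rng mul) :
  (let C := commS mul (allR (R:=R)) (allR (R:=R)) in
   forall z, commS mul C (prodS mul C C) z -> z = 0) ->
  forall z, comm_ideal mul z -> nilpotent_r mul z.
Proof. exact: main_thm. Qed.
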